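(* Let $(X,\|\cdot\|)$ be a normed linear space over $\mathbb{R}$ or $\mathbb{C}$, and let $a,x_1,\dots,x_n\in X\setminus\{0\}$ satisfy $\|a\|\ge\|x_j-a\|$ for each $j\in\{1,\dots,n\}$. Then for any $p_1,\dots,p_n\ge0$ with $\sum_{j=1}^n p_j=1$, $$\frac{\big\|\sum_{j=1}^n p_jx_j\big\|}{\sum_{j=1}^n p_j\|x_j\|}\ \ge\ \min_{1\le j\le n}\left\{\frac{\|a\|-\|x_j-a\|}{\|x_j\|}\right\}\ (\ge0).$$ The inequality is sharp: equality holds when $x_1=\dots=x_n=\varepsilon a$ for some $\varepsilon\in(0,1)$. *)

(* Defs.v *)
From HB Require Import structures.
From mathcomp Require Import all_boot all_order all_algebra.
From mathcomp Require Import all_classical all_reals normedtype.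
Set Implicit Arguments. Unset Strict Implicit. Unset Printing Implicit Defensive.
Import Order.TTheory GRing.Theory Num.Theory.
Import numFieldNormedType.Exports.
Local Open Scope ring_scope.

Definition minfam (K : numFieldType) (n : nat) (c : 'I_n.+1 -> K) : K :=
  \big[Num.min/c ord0]_(j < n.+1) c j.

(* Main.v *)
Require Import Defs.
From HB Require Import structures.
From mathcomp Require Import all_boot all_order all_algebra.
From mathcomp Require Import all_classical all_reals normedtype.
Import Order.TTheory GRing.Theory Num.Theory.
Import numFieldNormedType.Exports.
Local Open Scope ring_scope.
From mathcomp Require Import ring.

Lemma min_real_facts {K : numFieldType} {x y : K} :
  x \is Num.real -> y \is Num.real ->
  [/\ Num.min x y \is Num.real, Num.min x y <= x & Num.min x y <= y].
Proof.
move=> xr yr; rewrite /Num.min /Order.min.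
case: ifP => h; first by split => //; apply: ltW.
split => //; rewrite real_leNgt ?h //.
Qed.

Lemma big_min_le (K : numFieldType) (I : eqType) (r : seq I) (F : I -> K) (x0 : K) :
  x0 \is Num.real -> (forall i, F i \is Num.real) ->
  [/\ \big[Num.min/x0]_(i <- r) F i \is Num.real,
      \big[Num.min/x0]_(i <- r) F i <= x0 &
      forall i, i \in r -> \big[Num.min/x0]_(i <- r) F i <= F i].
Proof.
move=> x0r Fr; elim: r => [|j r [br bx bi]].
  by rewrite big_nil; split.
rewrite big_cons; have [mr m1 m2] := min_real_facts (Fr j) br.
split => //; first exact: le_trans m2 bx.
move=> i; rewrite in_cons => /orP [/eqP -> //|ir].
exact: le_trans m2 (bi i ir).
Qed.

Theorem theorem2p3 (K : numFieldType) (X : normedModType K) (n : nat)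
    (a : X) (x : 'I_n.+1 -> X) (p : 'I_n.+1 -> K) :
  a != 0 -> (forall j, x j != 0) ->
  (forall j, `|x j - a| <= `|a|) ->
  (forall j, 0 <= p j) -> \sum_(j < n.+1) p j = 1 ->
  let m := minfam (fun j => (`|a| - `|x j - a|) / `|x j|) in
  let r := `|\sum_(j < n.+1) p j *: x j| / (\sum_(j < n.+1) p j * `|x j|) in
  [/\ m <= r, 0 <= m &
      forall eps : K, 0 < eps < 1 -> (forall j, x j = eps *: a) -> r = m].
Proof.
move=> a0 x0 hxa p0 p1 m r.
set c := (fun j => (`|a| - `|x j - a|) / `|x j|).
have c0 : forall j, 0 <= c j.
  by move=> j; rewrite /c divr_ge0 // subr_ge0.
have cr : forall j, c j \is Num.real by move=> j; apply: ger0_real.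
have [_ _ mle] := big_min_le _ _ (index_enum 'I_n.+1) c (c ord0) (cr ord0) cr.
have mle' : forall j, m <= c j by move=> j; apply: mle; rewrite mem_index_enum.
have m0 : 0 <= m.
  rewrite /m /minfam; apply: (big_ind (fun v => 0 <= v)) => [|u v u0 v0|j _]; [exact: c0|idtac|exact: c0].
  by rewrite /Num.min /Order.min; case: ifP.
split => //.
- set D := \sum_(j < n.+1) p j * `|x j|.
  have D0 : 0 < D.
    rewrite lt0r sumr_ge0 ?andbT; last by move=> j _; rewrite mulr_ge0.
    apply/negP => /eqP HD.
    have := psumr_eq0P (fun j _ => mulr_ge0 (p0 j) (normr_ge0 (x j))) HD.
    move=> H; have pz : forall j, p j = 0.
      move=> j; have /eqP := H j isT; rewrite mulf_eq0 normr_eq0 (negbTE (x0 j)) orbF.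
      by move/eqP.
    by move: p1; rewrite big1 // => /eqP; rewrite eq_sym oner_eq0.
  rewrite /r ler_pdivlMr //.
  apply: (@le_trans _ _ (\sum_(j < n.+1) p j * (`|a| - `|x j - a|))).
    rewrite /D mulr_sumr; apply: ler_sum => j _.
    have -> : `|a| - `|x j - a| = c j * `|x j|.
      by rewrite /c divfK // normr_eq0.
    by rewrite mulrCA ler_wpM2l // ler_wpM2r.
  have -> : \sum_(j < n.+1) p j *: x j = a + \sum_(j < n.+1) p j *: (x j - a).
    under [X in _ = _ + X]eq_bigr => j _ do rewrite scalerBr.
    by rewrite sumrB -scaler_suml p1 scale1r addrC subrK.
  apply: le_trans (lerB_normD _ _).
  under eq_bigr => j _ do rewrite mulrBr.
  rewrite sumrB -mulr_suml p1 mul1r lerD2l lerN2.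
  apply: le_trans (ler_norm_sum _ _ _) _.
  apply: ler_sum => j _; rewrite normrZ ger0_norm //.
- move=> eps /andP [e0 e1] hx.
  have ea : 0 < `|a| by rewrite normr_gt0.
  have c1 : forall j, c j = 1.
    move=> j; rewrite /c hx (_ : eps *: a - a = (eps - 1) *: a); last by rewrite scalerBl scale1r.
    have e1' : eps - 1 < 0 by rewrite subr_lt0.
    rewrite !normrZ (gtr0_norm e0) (ltr0_norm e1') opprB.
    have -> : `|a| - (1 - eps) * `|a| = eps * `|a| by ring.
    by rewrite divff // mulf_neq0 ?gt_eqF.
  have -> : m = 1.
    rewrite /m /minfam; apply: (big_ind (fun v => v = 1)) => [|u v -> ->|j _]; first exact: c1.
      by rewrite /Num.min /Order.min ltxx.
    exact: c1.
  rewrite /r.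
  under eq_bigr => j _ do rewrite hx scalerA.
  under [X in _ / X]eq_bigr => j _ do rewrite hx normrZ gtr0_norm // mulrA.
  rewrite -scaler_suml -mulr_suml -big_distrl /= p1 mul1r normrZ gtr0_norm //.
  rewrite -mulr_suml p1 mul1r.
  apply: divff. rewrite mulf_neq0 //; apply: lt0r_neq0 => //.
Qed.
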